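(* Let $T$ be a tree on $n$ vertices. Suppose there are a leaf $v$ of $T$ and an integer $k\ge1$ such that $|N_2(v)|=\lceil n/2\rceil-4+k$ and $|N_{\ge4}(v)|\ge k$. Then $\operatorname{diam}(\mathcal{C}_3(T))\ge\lfloor 3n/2\rfloor+1$.
   Context: For a vertex $v$ of a tree, $N_i(v)$ is the set of vertices at distance exactly $i$ from $v$ and $N_{\ge i}(v)$ the set of vertices at distance at least $i$ from $v$. A proper 3-coloring of a tree $T=(V,E)$ is a map $f\colon V\to\mathbb{Z}/3\mathbb{Z}$ with $f(u)\neq f(v)$ for every edge $uv\in E$. The 3-coloring graph $\mathcal{C}_3(T)$ has the proper 3-colorings as vertices, two colorings adjacent iff they differ at exactly one vertex; $\operatorname{diam}$ denotes graph diameter. *)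

(* Defs.v *)
From mathcomp Require Import all_boot.
Set Implicit Arguments. Unset Strict Implicit. Unset Printing Implicit Defensive.

Section Graphs.
Variable T : finType.
Implicit Types (e : rel T).

Definition simple_graph e := symmetric e /\ irreflexive e.

Definition is_tree e :=
  [/\ simple_graph e,
      (forall x y : T, connect e x y) &
      (forall c : seq T, uniq c -> 3 <= size c -> ~~ cycle e c)].

Definition degree e (v : T) := #|[set u | e v u]|.
Definition leaf e (v : T) := degree e v == 1.

Definition walk_len e (u w : T) (k : nat) : bool :=
  [exists p : k.-tuple T, path e u p && (last u p == w)].

(* dist(u,w) >= m : no walk of length < m (dist = +oo if unreachable) *)
Definition dist_ge e (u w : T) (m : nat) : bool :=
  [forall j : 'I_m, ~~ walk_len e u w j].

Definition dist_eq e (u w : T) (i : nat) : bool :=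
  walk_len e u w i && dist_ge e u w i.

Definition Nd e (v : T) (i : nat) : {set T} := [set u | dist_eq e v u i].
Definition Nge e (v : T) (i : nat) : {set T} := [set u | dist_ge e v u i].

(* diam(G) >= m, where G is the graph on the vertices satisfying [vert]
   with adjacency [e] (diameter = max distance, +oo if disconnected) *)
Definition diam_ge (vert : pred T) e (m : nat) : Prop :=
  exists u w, [/\ vert u, vert w & dist_ge e u w m].
End Graphs.

Section Colorings.
Variable V : finType.
Variable e : rel V.

Definition coloring3 := {ffun V -> 'I_3}.

Definition proper3 (f : coloring3) : bool :=
  [forall x, forall y, e x y ==> (f x != f y)].

Definition col_adj : rel coloring3 :=
  fun f g => [&& proper3 f, proper3 g & #|[set x | f x != g x]| == 1].
End Colorings.

(* Main.v *)
Require Import Defs.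
From mathcomp Require Import all_boot all_algebra zify.
Set Implicit Arguments. Unset Strict Implicit. Unset Printing Implicit Defensive.

Lemma walk_lenP (T : finType) (e : rel T) u w k :
  reflect (exists p : seq T, [/\ size p = k, path e u p & last u p = w])
          (walk_len e u w k).
Proof.
apply: (iffP existsP) => [[p /andP[pp /eqP lp]]|[p [sp pp lp]]].
  by exists (tval p); split=> //; exact: size_tuple.
have sp' : size p == k by rewrite sp.
by exists (Tuple sp'); rewrite /= pp lp eqxx.
Qed.

Lemma not_uniq_split (T : eqType) (s : seq T) :
  ~~ uniq s -> exists x s1 s2 s3, s = s1 ++ x :: s2 ++ x :: s3.
Proof.
elim: s => [//|y t IH] /=; rewrite negb_and negbK.
case/orP=> [yt|/IH [x [s1 [s2 [s3 ->]]]]].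
  by case/splitPr: yt => t1 t2; exists y, [::], t1, t2.
by exists x, (y :: s1), s2, s3.
Qed.

Lemma odd_cycle (T : eqType) (e : rel T) : irreflexive e ->
  forall s, cycle e s -> odd (size s) ->
  exists c, [/\ uniq c, 2 < size c & cycle e c].
Proof.
move=> irr.
suff H : forall N s, size s <= N -> cycle e s -> odd (size s) ->
  exists c, [/\ uniq c, 2 < size c & cycle e c] by move=> s; apply: (H (size s)).
elim=> [|N IH] s; first by rewrite leqn0 => /eqP ->.
move=> sz cyc od; case: (boolP (uniq s)) => us.
  exists s; split=> //.
  case: s sz cyc od us => [|x [|y [|z s']]] //= _; by rewrite irr.
case/not_uniq_split: us => x [s1 [s2 [s3 Es]]]; subst s.
have cyc' : cycle e (x :: s2 ++ x :: s3 ++ s1).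
  by move: cyc; rewrite -(rot_cycle (size s1)) rot_size_cat /= -catA.
move: cyc'; rewrite /= rcons_cat cat_path /= => /and3P[p2 ex p3].
have c1 : cycle e (x :: s2) by rewrite /= rcons_path p2 ex.
have c2 : cycle e (x :: s3 ++ s1) by [].
move: od sz; rewrite !size_cat /= size_cat /= => od sz.
case o2: (odd (size s2)).
- apply: (IH (x :: s3 ++ s1)) => //=; rewrite size_cat; first lia.
  by move: od; rewrite !oddD /= !oddD /= o2; case: (odd (size s1)); case: (odd (size s3)).
- apply: (IH (x :: s2)) => //=; [lia| by rewrite o2].
Qed.

Lemma no_flat_edge (T : finType) (e : rel T) (v x y : T) (p q : seq T) :
  is_tree e -> path e v p -> last v p = x -> path e v q -> last v q = y ->
  size p = size q -> e x y -> False.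
Proof.
case=> [[sym irr] _ nocyc] pp lp pq lq spq exy.
case: q pq lq spq => [|q1 q'] pq lq spq.
  case: p pp lp spq => [|//] _ /= lp _ ; subst x; simpl in lq; subst y.
  by rewrite irr in exy.
set s := y :: rcons (rev (belast q1 q')) v ++ p.
have cs : cycle e s.
  rewrite /s /= rcons_cat cat_path last_rcons (rcons_path _ v) pp lp exy andbT.
  have E : (fun z : T => e^~ z) =2 e by move=> a b; rewrite /= sym.
  have := rev_path e v (q1 :: q'); rewrite lq (eq_path E) pq.
  by rewrite [belast _ _]/= rev_cons andbT.
have os : odd (size s).
  rewrite /s /= size_cat size_rcons size_rev size_belast spq /= negbK addnS /= oddD; by case: odd.
have [c [uc sc cc]] := odd_cycle irr cs os.
by move: (nocyc c uc sc); rewrite cc.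
Qed.

Lemma dist_fun (T : finType) (e : rel T) (v : T) : is_tree e ->
  exists d : T -> nat,
  [/\ forall x, walk_len e v x (d x),
      forall x i, dist_ge e v x i = (i <= d x),
      forall x i, dist_eq e v x i = (d x == i),
      forall x, (d x == 0) = (x == v) &
      forall x y, e x y -> (d y = (d x).+1) \/ (d x = (d y).+1)].
Proof.
move=> tr; have [[sym irr] conn _] := tr.
have wex : forall x, exists k, walk_len e v x k.
  move=> x; have /connectP [p pp lp] := conn v x.
  by exists (size p); apply/walk_lenP; exists p.
pose d x := ex_minn (wex x).
have Hd : forall x, walk_len e v x (d x) /\ forall k, walk_len e v x k -> d x <= k.
  by move=> x; rewrite /d; case: ex_minnP.
have dge : forall x i, dist_ge e v x i = (i <= d x).
  move=> x i; apply/forallP/idP => [H|le j].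
    rewrite leqNgt; apply/negP => lt.
    by have := H (Ordinal lt); rewrite (proj1 (Hd x)).
  apply/negP => W; have := (proj2 (Hd x)) _ W; have := ltn_ord j; lia.
exists d; split.
- by move=> x; case: (Hd x).
- exact: dge.
- move=> x i; rewrite /dist_eq dge; apply/andP/eqP => [[W le]|<-].
    by have := (proj2 (Hd x)) _ W; lia.
  by split; [case: (Hd x)|].
- move=> x; apply/eqP/eqP => [d0|->].
    have := proj1 (Hd x); rewrite d0 => /walk_lenP [p [sp _ lp]].
    by case: p sp lp => [|//] _ /= <-.
  have : walk_len e v v 0 by apply/walk_lenP; exists [::].
  by move/(proj2 (Hd v)); rewrite leqn0 => /eqP.
- move=> x y exy.
  have step : forall a b, e a b -> d b <= (d a).+1.
    move=> a b eab; have /walk_lenP [p [sp pp lp]] := proj1 (Hd a).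
    apply: (proj2 (Hd b)); apply/walk_lenP; exists (rcons p b).
    by rewrite size_rcons sp rcons_path pp lp eab last_rcons.
  have h1 := step _ _ exy; have h2 := step y x ltac:(by rewrite sym).
  have /walk_lenP [p [sp pp lp]] := proj1 (Hd x).
  have /walk_lenP [q [sq pq lq]] := proj1 (Hd y).
  case: (ltngtP (d x) (d y)) => c; [left|right|]; try lia.
  exfalso; exact: (no_flat_edge tr pp lp pq lq (etrans sp (etrans c (esym sq))) exy).
Qed.

Lemma upset_exists (T : finType) (d : T -> nat) m k :
  k <= #|[set x | m <= d x]| ->
  exists Z : {set T}, [/\ #|Z| = k, Z \subset [set x | m <= d x] &
     forall x y, x \in Z -> d x < d y -> y \in Z].
Proof.
set A := [set x | m <= d x].
elim: k => [|k IH] lek.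
  by exists set0; split; [rewrite cards0 | apply: sub0set | move=> x y; rewrite inE].
have [Z [cZ sZ uZ]] := IH (ltnW lek).
have : A :\: Z != set0.
  apply/negP => /eqP H.
  have : A \subset Z by rewrite -setD_eq0 H.
  by move/subset_leq_card; rewrite cZ; lia.
case/set0Pn => x0 x0in.
case: (arg_maxnP d x0in) => x xin xmax.
move/setDP: xin => [xA xZ].
exists (x |: Z); split.
- by rewrite cardsU1 xZ cZ.
- by rewrite subUset sub1set xA sZ.
- move=> z y; rewrite !inE => /orP [/eqP ->|zZ] lt; last by rewrite (uZ z y) ?orbT.
  apply/orP; right; apply/negPn/negP => yZ.
  have yin : y \in A :\: Z.
    by rewrite inE yZ inE; move: xA; rewrite inE; lia.
  by have := xmax y yin; lia.
Qed.

Import GRing.Theory Num.Theory.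

Definition col3 (h : int) : 'I_3 := inord (absz (h %% 3)%Z).

Lemma col3E h : ((col3 h : nat)%:Z = h %% 3)%Z.
Proof.
rewrite /col3 inordK; first lia.
have : (0 <= (h %% 3)%Z)%R /\ ((h %% 3)%Z < 3)%R by lia.
lia.
Qed.

Definition liftc (V : finType) (e : rel V) (c : coloring3 V) (H : V -> int) :=
  (forall x, (H x %% 3)%Z = Posz (c x : nat)) /\
  (forall a b, e a b -> H b = (H a + 1)%R \/ H b = (H a - 1)%R).

Lemma lift_proper (V : finType) (e : rel V) c H : liftc e c H -> proper3 e c.
Proof.
case=> Hm He; apply/forallP => a; apply/forallP => b; apply/implyP => eab.
apply/negP => /eqP cab.
have h1 := Hm a; have h2 := Hm b; rewrite cab in h1.
case: (He a b eab); lia.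
Qed.

Definition Ssum (V : finType) (H H0 : V -> int) := \sum_x absz (H x - H0 x)%R.

Lemma lift_step (V : finType) (e : rel V) (c c' : coloring3 V) H H0 :
  irreflexive e -> symmetric e -> col_adj e c c' -> liftc e c H ->
  exists H', [/\ liftc e c' H', (forall y, ((H' y - H y) %% 2)%Z = 0) &
                 Ssum H' H0 <= Ssum H H0 + 2].
Proof.
move=> irr sym /and3P [pc pc' /cards1P [x Ex]] [Hm He].
have same : forall y, y != x -> c' y = c y.
  move=> y yx; apply/eqP; rewrite eq_sym; apply/negPn/negP => ne.
  have : y \in [set x0 | c x0 != c' x0] by rewrite inE.
  by rewrite Ex inE (negbTE yx).
have dif : c x != c' x.
  have : x \in [set x0 | c x0 != c' x0] by rewrite Ex inE.
  by rewrite inE.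
pose Hx := if ((H x + 2) %% 3 == Posz (c' x : nat))%Z then (H x + 2)%R else (H x - 2)%R.
pose H' y := if y == x then Hx else H y.
have core : forall y, e x y -> H y = (Hx + 1)%R \/ H y = (Hx - 1)%R.
  move=> y exy.
  have yx : y != x by apply/eqP => yx; subst y; rewrite irr in exy.
  have cy : c' y = c y := same y yx.
  have pr : c' x != c' y.
    by move/forallP: pc' => /(_ x) /forallP /(_ y); rewrite exy.
  rewrite cy in pr.
  have hx := Hm x; have hy := Hm y.
  have : (c' x : nat) < 3 by [].
  move: dif pr; rewrite -!(inj_eq val_inj) /= => /eqP dif /eqP pr lt3.
  rewrite /Hx; case: ifP => /eqP C; case: (He x y exy); lia.
exists H'; split.
- split.
  + move=> y; rewrite /H'; case: eqP => [->|yx]; last by rewrite (same y (introN eqP yx)).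
    have := Hm x; have : (c' x : nat) < 3 by [].
    move: dif; rewrite -(inj_eq val_inj) /= => /eqP dif.
    rewrite /Hx; case: ifP => /eqP C; lia.
  + move=> a b eab; rewrite /H'.
    case: (eqVneq a x) => [ax|ax]; case: (eqVneq b x) => [bx|bx].
    * by subst; rewrite irr in eab.
    * by subst a; apply: core.
    * subst b; have := core a; rewrite sym => /(_ eab); lia.
    * exact: He.
- move=> y; rewrite /H'; case: eqP => [->|_]; last lia.
  by rewrite /Hx; case: ifP => _; lia.
- rewrite /Ssum (bigD1 x) //= [X in _ <= X + _](bigD1 x) //=.
  rewrite (eq_bigr (fun y => absz (H y - H0 y)%R)); last first.
    by move=> y /negbTE yx; rewrite /H' yx.
  rewrite /H' eqxx /Hx; case: ifP => _; lia.
Qed.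

Lemma walk_lift (V : finType) (e : rel V) (H0 : V -> int) :
  irreflexive e -> symmetric e -> forall p c H, liftc e c H ->
  (forall y, ((H y - H0 y) %% 2)%Z = 0) -> path (col_adj e) c p ->
  exists H', [/\ liftc e (last c p) H', (forall y, ((H' y - H0 y) %% 2)%Z = 0) &
                 Ssum H' H0 <= Ssum H H0 + 2 * size p].
Proof.
move=> irr sym; elim=> [|c' p IH] c H lH pH /=.
  by move=> _; exists H; split; rewrite // muln0 addn0.
case/andP => adj pp.
have [H1 [lH1 pH1 sH1]] := lift_step H0 irr sym adj lH.
have pH1' : forall y, ((H1 y - H0 y) %% 2)%Z = 0.
  by move=> y; have := pH1 y; have := pH y; lia.
have [H2 [lH2 pH2 sH2]] := IH c' H1 lH1 pH1' pp.
exists H2; split => //; lia.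
Qed.

Lemma connect_const (V : finType) (e : rel V) (P : V -> int) :
  (forall a b, e a b -> P a = P b) -> forall x y, connect e x y -> P x = P y.
Proof.
move=> HP x y /connectP [p pp ->]; elim: p x pp => [//|z p IH] x /= /andP [exz pp].
by rewrite (HP _ _ exz); apply: IH.
Qed.

Lemma lift_diff_const (V : finType) (e : rel V) g H H' v :
  (forall x y, connect e x y) -> liftc e g H -> liftc e g H' ->
  forall x, (H x - H' x = H v - H' v)%R.
Proof.
move=> conn [Hm He] [Hm' He'] x.
apply: (connect_const (P := fun y => (H y - H' y)%R)) (conn x v).
move=> a b eab; have := Hm a; have := Hm b; have := Hm' a; have := Hm' b.
by case: (He a b eab); case: (He' a b eab); lia.
Qed.

Lemma sum_card (V : finType) (A : {set V}) : \sum_x (x \in A : nat) = #|A|.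
Proof.
rewrite -sum1_card [RHS]big_mkcond /=; apply: eq_bigr => x _; by case: (x \in A).
Qed.

Lemma sum_lin6 (V : finType) (F : V -> nat) (A0 A1 A2 A3 A4 A5 : {set V})
  a0 a1 a2 a3 a4 a5 :
  (forall x, F x = a0 * (x \in A0) + a1 * (x \in A1) + a2 * (x \in A2)
                   + a3 * (x \in A3) + a4 * (x \in A4) + a5 * (x \in A5)) ->
  \sum_x F x = a0 * #|A0| + a1 * #|A1| + a2 * #|A2| + a3 * #|A3|
               + a4 * #|A4| + a5 * #|A5|.
Proof.
move=> HF; rewrite (eq_bigr _ (fun x _ => HF x)) !big_split /= -!big_distrr /=.
by rewrite !sum_card.
Qed.

Lemma sum_one (V : finType) : \sum_(x : V) 1 = #|V|.
Proof. by rewrite sum1_card. Qed.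
Theorem mainTheorem13 (V : finType) (e : rel V) (v : V) (k : nat) :
  is_tree e -> leaf e v -> 1 <= k ->
  (* |N_2(v)| = ceil(n/2) - 4 + k, written without truncated subtraction *)
  #|Nd e v 2| + 4 = uphalf #|V| + k ->
  k <= #|Nge e v 4| ->
  diam_ge (@proper3 V e) (col_adj e) ((3 * #|V|)./2 + 1).
Proof.
move=> tr lf k1 hN2 hN4.
have [[sym irr] conn _] := tr.
have [d [dW dge deq d0 dedge]] := dist_fun v tr.
have dv0 : d v = 0 by apply/eqP; rewrite d0.
have N2E : Nd e v 2 = [set x | d x == 2] by apply/setP => x; rewrite !inE deq.
have N4E : Nge e v 4 = [set x | 4 <= d x] by apply/setP => x; rewrite !inE dge.
rewrite N2E in hN2; rewrite N4E in hN4.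
have c1 : #|[set x | d x == 1]| = 1.
  have -> : [set x | d x == 1] = [set y | e v y].
    apply/setP => x; rewrite !inE; apply/eqP/idP.
      move=> dx1; have := dW x; rewrite dx1 => /walk_lenP [p [sp pp lp]].
      case: p sp pp lp => [|y [|//]] //= _ /andP [evy _] <-; exact: evy.
    by move=> evx; case: (dedge v x evx); lia.
  exact: (eqP lf).
have c0 : #|[set x | d x == 0]| = 1.
  have -> : [set x | d x == 0] = [set v] by apply/setP => x; rewrite !inE d0.
  exact: cards1.
have [Z [cZ sZ uZ]] := upset_exists hN4.
have Zd : forall x, x \in Z -> 4 <= d x.
  by move=> x /(subsetP sZ); rewrite inE.
pose E x : nat := if d x <= 3 then 4 - d x else (x \notin Z).
have Erel : forall a b, e a b -> d b = (d a).+1 -> E b = E a \/ E a = (E b).+1.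
  move=> a b eab db; rewrite /E.
  case: (boolP (a \in Z)) => aZ; case: (boolP (b \in Z)) => bZ /=.
  - have := Zd a aZ; have := Zd b bZ; case: ifP; case: ifP; lia.
  - by move: bZ; rewrite (uZ a b aZ) // db.
  - have := Zd b bZ; case: ifP; case: ifP; lia.
  - case: ifP; case: ifP; lia.
have E4 : forall x, E x <= 4 by move=> x; rewrite /E; case: ifP => _; [lia|case: (x \in Z)].
pose H0 x : int := Posz (d x).
pose Hg x : int := (Posz (d x) + 2 * Posz (E x))%R.
pose f : coloring3 V := [ffun x => col3 (H0 x)].
pose g : coloring3 V := [ffun x => col3 (Hg x)].
have lf0 : liftc e f H0.
  split => [x|a b eab]; first by rewrite ffunE col3E.
  rewrite /H0; case: (dedge a b eab); lia.
have lg : liftc e g Hg.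
  split => [x|a b eab]; first by rewrite ffunE col3E.
  rewrite /Hg; case: (dedge a b eab) => h.
    by case: (Erel a b eab h); lia.
  have eba : e b a by rewrite sym.
  by case: (Erel b a eba h); lia.
exists f, g; split; [exact: lift_proper lf0 | exact: lift_proper lg |].
apply/forallP => j; apply/negP => /walk_lenP [p [sp pp lp]].
have [H [lH pH sH]] := @walk_lift V e H0 irr sym p f H0 lf0 (fun y => ltac:(lia)) pp.
rewrite lp in lH.
have SH00 : Ssum H0 H0 = 0 by rewrite /Ssum big1 // => x _; rewrite subrr.
have hc := lift_diff_const v conn lH lg.
have C3 : ((H v - Hg v) %% 3)%Z = 0.
  by have := (proj1 lH) v; have := (proj1 lg) v; lia.
have C2 : ((H v - Hg v) %% 2)%Z = 0.
  by have := pH v; rewrite /H0 /Hg dv0; lia.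
pose t := ((H v - Hg v) %/ 6)%Z.
have pw : forall x, absz (H x - H0 x)%R = 2 * absz (Posz (E x) + 3 * t)%R.
  move=> x; have := hc x.
  have h1 : Hg x = (Posz (d x) + 2 * Posz (E x))%R by [].
  have h2 : H0 x = Posz (d x) by [].
  have tE : t = ((H v - Hg v) %/ 6)%Z by [].
  lia.
have SHE : Ssum H H0 = 2 * \sum_x absz (Posz (E x) + 3 * t)%R.
  by rewrite /Ssum big_distrr /=; apply: eq_bigr => x _; exact: pw.
have Sle : \sum_x absz (Posz (E x) + 3 * t)%R <= j.
  by move: sH; rewrite SHE SH00 sp; lia.
pose A0 := [set x | d x == 0]; pose A1 := [set x | d x == 1].
pose A2 := [set x | d x == 2]; pose A3 := [set x | d x == 3].
pose A4 := [set x | 4 <= d x].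
have cases : forall x, (x \in Z -> 4 <= d x) -> True by [].
have SE := @sum_lin6 V (fun x => E x + (x \in Z)) A0 A1 A2 A3 A4 Z 4 3 2 1 1 0.
have SN := @sum_lin6 V (fun x => 1) A0 A1 A2 A3 A4 Z 1 1 1 1 1 0.
have SF := @sum_lin6 V (fun x => absz (Posz (E x) - 3)%R) A0 A1 A2 A3 A4 Z 1 0 1 2 2 1.
have S2 := @sum_lin6 V (fun x => 2) A0 A1 A2 A3 A4 Z 2 2 2 2 2 0.
have pwc : forall x, [/\ E x + (x \in Z) = 4 * (x \in A0) + 3 * (x \in A1) + 2 * (x \in A2)
                   + 1 * (x \in A3) + 1 * (x \in A4) + 0 * (x \in Z),
    1 = 1 * (x \in A0) + 1 * (x \in A1) + 1 * (x \in A2)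
                   + 1 * (x \in A3) + 1 * (x \in A4) + 0 * (x \in Z),
    absz (Posz (E x) - 3)%R = 1 * (x \in A0) + 0 * (x \in A1) + 1 * (x \in A2)
                   + 2 * (x \in A3) + 2 * (x \in A4) + 1 * (x \in Z) &
    2 = 2 * (x \in A0) + 2 * (x \in A1) + 2 * (x \in A2)
                   + 2 * (x \in A3) + 2 * (x \in A4) + 0 * (x \in Z)].
  move=> x; rewrite /E !inE.
  case: (boolP (x \in Z)) => xZ; [have := Zd x xZ|]; case: (d x) => [|[|[|[|m]]]] //=.
have {SE}SE := SE (fun x => match pwc x with And4 a _ _ _ => a end).
have {SN}SN := SN (fun x => match pwc x with And4 _ a _ _ => a end).
have {SF}SF := SF (fun x => match pwc x with And4 _ _ a _ => a end).
have {S2}S2 := S2 (fun x => match pwc x with And4 _ _ _ a => a end).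
rewrite big_split /= sum_card in SE; rewrite sum_one in SN.
have cA0 : #|A0| = 1 by [].
have cA1 : #|A1| = 1 by [].
move: Sle (ltn_ord j); rewrite -/A2 -/A4 in hN2 hN4.
have [t0|tn] := boolP (0 <= t)%R.
  have : \sum_x E x <= \sum_x absz (Posz (E x) + 3 * t)%R.
    by apply: leq_sum => x _; lia.
  lia.
have [tm1|tm2] := boolP (t == -1)%R.
  have : \sum_x absz (Posz (E x) - 3)%R = \sum_x absz (Posz (E x) + 3 * t)%R.
    by apply: eq_bigr => x _; move/eqP: tm1 => ->; lia.
  lia.
have : \sum_(x : V) 2 <= \sum_x absz (Posz (E x) + 3 * t)%R.
  by apply: leq_sum => x _; have := E4 x; lia.
lia.
Qed.
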